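(* Let $\mathfrak{X}$ be a Bourgain–Delbaen space determined by $(\Gamma_q,i_q)_q$, let $\Gamma'$ be an infinite subset of $\Gamma$, for all $q$ set $\Gamma_q'=\Gamma'\cap\Gamma_q$, $\Delta_q'=\Gamma'\cap\Delta_q$, and let $q_0=\min\{q:\Gamma_q'\neq\varnothing\}$. The following are equivalent: (a) $\Gamma'$ is self-determined; (b) for all $q\geqslant q_0$, $\langle\{d_\gamma^*:\gamma\in\Gamma_q'\}\rangle=\langle\{e_\gamma^*:\gamma\in\Gamma_q'\}\rangle$; (c) $\langle\{d_\gamma^*:\gamma\in\Gamma_{q_0}'\}\rangle=\langle\{e_\gamma^*:\gamma\in\Gamma_{q_0}'\}\rangle$ and for all $q\geqslant q_0$, $\langle\{c_\gamma^*:\gamma\in\Delta_{q+1}'\}\rangle\subset\langle\{e_\gamma^*\circ P_E:\gamma\in\Gamma_q',\ E\text{ an interval of }\mathbb{N}\}\rangle$; (d) for all $\gamma\in\Gamma\setminus\Gamma'$ and $\eta\in\Gamma'$, $e_\eta^*(d_\gamma)=0$; (e) for all $\gamma\in\Gamma\setminus\Gamma'$ and $\eta\in\Gamma'$, $c_\eta^*(d_\gamma)=0$.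
   Context: Bourgain–Delbaen spaces: $(\Gamma_q)_{q\geqslant1}$ is a strictly increasing sequence of non-empty finite sets, $\Gamma=\bigcup_q\Gamma_q$, and $i_q:\ell_\infty(\Gamma_q)\to\ell_\infty(\Gamma)$ are linear extension operators (i.e. $i_q(x)|_{\Gamma_q}=x$) with $C=\sup_q\|i_q\|<\infty$, which are compatible: for $p<q$, $i_p=i_q\circ r_q\circ i_p$, where $r_q:\ell_\infty(\Gamma)\to\ell_\infty(\Gamma_q)$ is restriction. Set $\Delta_1=\Gamma_1$, $\Delta_{q+1}=\Gamma_{q+1}\setminus\Gamma_q$, and for $\gamma\in\Delta_q$ let $d_\gamma=i_q(e_\gamma)$. The space $\mathfrak{X}$ is the closed linear span of $\{d_\gamma:\gamma\in\Gamma\}$ in $\ell_\infty(\Gamma)$. With $M_q=\langle\{d_\gamma:\gamma\in\Delta_q\}\rangle$, $(M_q)_q$ is an FDD of $\mathfrak{X}$ and $P_E$ denotes the associated projection onto $\bigoplus_{q\in E}M_q$ for an interval $E\subset\mathbb{N}$. For $\gamma\in\Gamma$, $e_\gamma^*$ is the evaluation at coordinate $\gamma$ restricted to $\mathfrak{X}$, $(d_\gamma^* )_{\gamma\in\Gamma}$ are the functionals biorthogonal to the basis $(d_\gamma)_\gamma$ (for $\gamma\in\Delta_q$, $d_\gamma^*=e_\gamma^*\circ P_{\{q\}}$), and $c_\gamma^*=e_\gamma^*-d_\gamma^*$. An infinite subset $\Gamma'\subseteq\Gamma$ is self-determined if for every $\gamma\in\Gamma'$ the functional $d_\gamma^*$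 lies in the linear span of $\{e_\eta^*:\eta\in\Gamma'\}$. $\langle\cdot\rangle$ denotes linear span. *)

(* Defs.v *)
From HB Require Import structures.
From mathcomp Require Import all_boot all_order all_algebra.
From mathcomp Require Import reals.
Set Implicit Arguments. Unset Strict Implicit. Unset Printing Implicit Defensive.
Import Order.TTheory GRing.Theory Num.Theory.
Local Open Scope ring_scope.

Definition restrict (G : Type) (lev : G -> nat) (R : Type) (q : nat)
  (x : G -> R) : {g : G | (lev g <= q)%N} -> R := fun g => x (sval g).
Arguments restrict {G} lev {R} q x g.

(* Bourgain--Delbaen data (Gamma_q, i_q)_q.  [lev g] is the unique q with
   g in Delta_q, so Gamma_q = {g | lev g <= q} and Gamma = union of Gamma_q.
   Elements of l_oo(Gamma) are represented by functions G -> R. *)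
Record BDspace (R : realType) := BDSpace {
  bd_G : eqType;
  bd_lev : bd_G -> nat;
  bd_lev_ge1 : forall g, (1 <= bd_lev g)%N;
  bd_Delta_fin : forall q, exists s : seq bd_G, forall g, bd_lev g = q -> g \in s;
  bd_Delta_nonempty : forall q, (1 <= q)%N -> exists g, bd_lev g = q;
  bd_ext : forall q : nat, ({g : bd_G | (bd_lev g <= q)%N} -> R) -> bd_G -> R;
  bd_ext_linear : forall q, (1 <= q)%N -> forall (a : R) (x y : {g : bd_G | (bd_lev g <= q)%N} -> R),
    @bd_ext q (fun g => a * x g + y g) = (fun t => a * @bd_ext q x t + @bd_ext q y t);
  bd_ext_extends : forall q, (1 <= q)%N -> forall (x : {g : bd_G | (bd_lev g <= q)%N} -> R) g, @bd_ext q x (sval g) = x g;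
  bd_C : R;
  bd_ext_bounded : forall q, (1 <= q)%N -> forall (x : {g : bd_G | (bd_lev g <= q)%N} -> R) (M : R),
    (forall g, `|x g| <= M) -> forall t, `|@bd_ext q x t| <= bd_C * M;
  bd_compat : forall p q, (1 <= p)%N -> (p < q)%N -> forall (x : {g : bd_G | (bd_lev g <= p)%N} -> R),
    @bd_ext p x = @bd_ext q (restrict bd_lev q (@bd_ext p x))
}.

Arguments bd_ext {R} b q x t.
Arguments bd_lev {R} b g.
Arguments bd_G {R} b.

Section BD.
Variables (R : realType) (B : BDspace R).
Local Notation G := (bd_G B).
Local Notation lev := (bd_lev B).

(* i_q o r_q  (with i_0 r_0 := 0, as Gamma_0 is empty) *)
Definition Qproj (q : nat) (x : G -> R) : G -> R :=
  match q with
  | 0%N => fun _ => 0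
  | _ => bd_ext B q (restrict lev q x)
  end.

Definition unitvec (q : nat) (g : G) : {h : G | (lev h <= q)%N} -> R :=
  fun h => if sval h == g then 1 else 0.

Definition dvec (g : G) : G -> R := bd_ext B (lev g) (@unitvec (lev g) g).

Definition in_span_d (y : G -> R) : Prop :=
  exists n (a : 'I_n -> R) (g : 'I_n -> G),
    y = (fun t => \sum_(i < n) a i * dvec (g i) t).

Definition inX (x : G -> R) : Prop :=
  forall eps : R, 0 < eps ->
    exists y, in_span_d y /\ forall t, `|x t - y t| <= eps.

(* intervals of N: [a,b] (empty if b < a) or [a, oo) *)
Inductive nat_interval := Ifin of nat & nat | Iinf of nat.

(* P_E ; on X it is the FDD projection onto (+)_{q in E} M_q,
   since P_[1,q] = i_q r_q on X *)
Definition PE (E : nat_interval) (x : G -> R) : G -> R :=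
  match E with
  | Ifin a b => if (a <= b)%N then (fun t => Qproj b x t - Qproj a.-1 x t)
                else (fun _ => 0)
  | Iinf a => fun t => x t - Qproj a.-1 x t
  end.

(* functionals (only their values on X matter) *)
Definition functional := (G -> R) -> R.

Definition estar (g : G) : functional := fun x => x g.
Definition dstar (g : G) : functional :=
  fun x => PE (Ifin (lev g) (lev g)) x g.
Definition cstar (g : G) : functional := fun x => estar g x - dstar g x.

Definition in_span (S : functional -> Prop) (f : functional) : Prop :=
  exists n (a : 'I_n -> R) (phi : 'I_n -> functional),
    (forall i, S (phi i)) /\
    forall x, inX x -> f x = \sum_(i < n) a i * phi i x.

Definition span_incl (S T : functional -> Prop) : Prop :=
  forall f, in_span S f -> in_span T f.

Definition span_eq (S T : functional -> Prop) : Prop :=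
  span_incl S T /\ span_incl T S.

Definition infinite_subset (G' : G -> Prop) : Prop :=
  ~ exists s : seq G, forall g, G' g -> g \in s.

Definition self_determined (G' : G -> Prop) : Prop :=
  infinite_subset G' /\
  forall g, G' g -> in_span (fun f => exists h, G' h /\ f = estar h) (dstar g).

End BD.

(* Main.v *)
Require Import Defs.
From HB Require Import structures.
From mathcomp Require Import all_boot all_order all_algebra.
From mathcomp Require Import reals.
From mathcomp Require Import zify.
From Stdlib Require Import Classical FunctionalExtensionality.
Set Implicit Arguments. Unset Strict Implicit. Unset Printing Implicit Defensive.
Import Order.TTheory GRing.Theory Num.Theory.
Local Open Scope ring_scope.

Section Aux.
Variables (R : realType) (B : BDspace R).
Local Notation G := (bd_G B).
Local Notation lev := (bd_lev B).
Local Notation ext := (bd_ext B).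
Local Notation sub q := {g : G | (lev g <= q)%N}.

Lemma ext0 q : (1 <= q)%N -> ext q (fun _ => 0) = (fun _ => 0).
Proof.
move=> Hq; have := @bd_ext_linear R B q Hq (-1) (fun _ => 0) (fun _ => 0); cbv beta.
have -> : (fun g : sub q => -1 * (0:R) + 0) = (fun _ => 0).
  by apply: functional_extensionality => g; rewrite mulr0 addr0.
move=> E; apply: functional_extensionality => t.
have := congr1 (fun f => f t) E => /= ->.
by rewrite mulN1r addNr.
Qed.

Lemma ext_add q (x y : sub q -> R) : (1 <= q)%N ->
  ext q (fun g => x g + y g) = (fun t => ext q x t + ext q y t).
Proof.
move=> Hq; have := @bd_ext_linear R B q Hq 1 x y; cbv beta.
have -> : (fun g : sub q => 1 * x g + y g) = (fun g => x g + y g).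
  by apply: functional_extensionality => g; rewrite mul1r.
move=> ->; apply: functional_extensionality => t; by rewrite mul1r.
Qed.

Lemma ext_scale q a (x : sub q -> R) : (1 <= q)%N ->
  ext q (fun g => a * x g) = (fun t => a * ext q x t).
Proof.
move=> Hq; have := @bd_ext_linear R B q Hq a x (fun _ => 0); cbv beta.
have -> : (fun g : sub q => a * x g + 0) = (fun g => a * x g).
  by apply: functional_extensionality => g; rewrite addr0.
move=> ->; apply: functional_extensionality => t; by rewrite (ext0 Hq) addr0.
Qed.

Lemma ext_sum q (I : Type) (r : seq I) (c : I -> R) (u : I -> sub q -> R) :
  (1 <= q)%N ->
  ext q (fun g => \sum_(i <- r) c i * u i g) =
  (fun t => \sum_(i <- r) c i * ext q (u i) t).
Proof.
move=> Hq; elim: r => [|i r IH].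
  have -> : (fun g : sub q => \sum_(i <- [::]) c i * u i g) = (fun _ => 0).
    by apply: functional_extensionality => g; rewrite big_nil.
  by rewrite (ext0 Hq); apply: functional_extensionality => t; rewrite big_nil.
have -> : (fun g : sub q => \sum_(j <- i :: r) c j * u j g) =
          (fun g => (fun g => c i * u i g) g + (fun g => \sum_(j <- r) c j * u j g) g).
  by apply: functional_extensionality => g; rewrite big_cons.
rewrite (ext_add _ _ Hq) IH (ext_scale _ _ Hq).
by apply: functional_extensionality => t; rewrite big_cons.
Qed.

Lemma ext_val q (x : sub q -> R) t (Ht : (lev t <= q)%N) : (1 <= q)%N ->
  ext q x t = x (exist _ t Ht).
Proof. move=> Hq; exact: (@bd_ext_extends R B q Hq x (exist _ t Ht)). Qed.

Lemma QprojE q (x : G -> R) (t : G) : (lev t <= q)%N -> Qproj q x t = x t.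
Proof.
move=> Ht; have Hq : (1 <= q)%N by apply: leq_trans (bd_lev_ge1 t) Ht.
case: q Ht Hq => [|q] Ht Hq //=.
by rewrite (ext_val _ Ht).
Qed.

Lemma Qproj_ext q (u : sub q -> R) : (1 <= q)%N -> Qproj q (ext q u) = ext q u.
Proof.
case: q u => [|q] u // Hq /=.
congr (ext _); apply: functional_extensionality => g.
by rewrite /restrict (@bd_ext_extends R B _ Hq).
Qed.

Lemma dvec_val (d h : G) : (lev h <= lev d)%N -> dvec d h = (h == d)%:R.
Proof.
move=> H; rewrite /dvec (ext_val _ H) ?bd_lev_ge1 // /unitvec /=.
by case: (h == d).
Qed.

Lemma dvec_high (d h : G) : (lev h < lev d)%N -> dvec d h = 0.
Proof.
move=> H; rewrite dvec_val; last exact: ltnW.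
case: eqP => // E; by move: H; rewrite E ltnn.
Qed.

Lemma Q_dvec q (d : G) : Qproj q (dvec d) = if (lev d <= q)%N then dvec d else (fun _ => 0).
Proof.
case: q => [|q]; first by rewrite /= leqNgt (bd_lev_ge1 d).
case: ltngtP => H.
- rewrite /= /dvec -(bd_compat (bd_lev_ge1 d) H) //.
- rewrite /=.
  have -> : restrict lev q.+1 (dvec d) = (fun _ => 0).
    apply: functional_extensionality => g; rewrite /restrict dvec_high //.
    by apply: leq_ltn_trans (svalP g) H.
  by rewrite ext0.
- by rewrite -H /dvec Qproj_ext // bd_lev_ge1.
Qed.

Lemma Q_dvec_zero q (d h : G) : dvec d h = 0 -> Qproj q (dvec d) h = 0.
Proof. by move=> H; rewrite Q_dvec; case: ifP. Qed.

Lemma PE_dvec_zero E (d h : G) : dvec d h = 0 -> PE E (dvec d) h = 0.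
Proof.
move=> H; case: E => [a b|a] /=.
  by case: ifP => _ //; rewrite !Q_dvec_zero // subr0.
by rewrite H Q_dvec_zero // subr0.
Qed.

Lemma dstarE (d : G) (x : G -> R) : dstar d x = x d - Qproj (lev d).-1 x d.
Proof. by rewrite /dstar /= leqnn QprojE. Qed.

Lemma dstar_dvec (e d : G) : dstar e (dvec d) = (e == d)%:R.
Proof.
rewrite dstarE Q_dvec.
have He := bd_lev_ge1 e.
case: leqP => H.
  rewrite subrr; case: eqP => // E; move: H; rewrite E.
  by case: (lev d) (bd_lev_ge1 d) => // n _; rewrite ltnn.
rewrite subr0; case: (ltngtP (lev d) (lev e)) => H2.
- by exfalso; move: H H2 He; lia.
- rewrite dvec_high //; case: eqP => // E; by move: H2; rewrite E ltnn.
- by rewrite dvec_val ?H2.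
Qed.

Lemma inX_dvec (d : G) : inX (dvec d).
Proof.
move=> eps Heps; exists (dvec d); split; last by move=> t; rewrite subrr normr0 ltW.
exists 1%N, (fun _ => 1), (fun _ => d).
apply: functional_extensionality => t; by rewrite big_ord1 mul1r.
Qed.


Local Notation F := (functional B).

Lemma span_ext (S : F -> Prop) (f g : F) :
  (forall x, inX x -> f x = g x) -> in_span S g -> in_span S f.
Proof.
move=> E [n [a [phi [HS Hg]]]]; exists n, a, phi; split => // x Hx.
by rewrite E // Hg.
Qed.

Lemma span_mono (S T : F -> Prop) (f : F) :
  (forall h, S h -> T h) -> in_span S f -> in_span T f.
Proof.
move=> ST [n [a [phi [HS Hg]]]]; exists n, a, phi; split => // i; exact: ST.
Qed.

Lemma span_elem (S : F -> Prop) (f : F) : S f -> in_span S f.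
Proof.
move=> Sf; exists 1%N, (fun _ => 1), (fun _ => f); split => // x _.
by rewrite big_ord1 mul1r.
Qed.

Lemma span_zero (S : F -> Prop) : in_span S (fun _ => 0).
Proof. exists 0%N, (fun _ => 0), (fun _ _ => 0); split => [[]|x _] //; by rewrite big_ord0. Qed.

Lemma span_add (S : F -> Prop) (f g : F) :
  in_span S f -> in_span S g -> in_span S (fun x => f x + g x).
Proof.
move=> [n1 [a1 [phi1 [HS1 H1]]]] [n2 [a2 [phi2 [HS2 H2]]]].
exists (n1 + n2)%N,
  (fun i => match split i with inl j => a1 j | inr k => a2 k end),
  (fun i => match split i with inl j => phi1 j | inr k => phi2 k end).
split.
  by move=> i; case: (split i).
move=> x Hx; rewrite big_split_ord /= H1 // H2 //.
congr (_ + _); apply: eq_bigr => i _.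
  by rewrite (unsplitK (inl i)).
by rewrite (unsplitK (inr i)).
Qed.

Lemma span_scale (S : F -> Prop) c (f : F) :
  in_span S f -> in_span S (fun x => c * f x).
Proof.
move=> [n [a [phi [HS H]]]]; exists n, (fun i => c * a i), phi; split => // x Hx.
by rewrite H // mulr_sumr; apply: eq_bigr => i _; rewrite mulrA.
Qed.

Lemma span_sum (S : F -> Prop) (I : Type) (r : seq I) (P : pred I)
  (c : I -> R) (Fi : I -> F) :
  (forall i, P i -> c i = 0 \/ in_span S (Fi i)) ->
  in_span S (fun x => \sum_(i <- r | P i) c i * Fi i x).
Proof.
move=> H; elim: r => [|i r IH].
  by apply: span_ext (span_zero S) => x _; rewrite big_nil.
case Pi: (P i).
- case: (H i Pi) => [c0|Hs].
    by apply: span_ext IH => x _; rewrite big_cons Pi c0 mul0r add0r.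
  apply: span_ext (span_add (span_scale (c i) Hs) IH) => x _.
  by rewrite big_cons Pi.
- by apply: span_ext IH => x _; rewrite big_cons Pi.
Qed.

Lemma enum_eq q : exists s : seq G, uniq s /\ forall d, (d \in s) = (lev d == q).
Proof.
case: (bd_Delta_fin B q) => t Ht.
exists (undup (filter (fun d => lev d == q) t)); split; first exact: undup_uniq.
move=> d; rewrite mem_undup mem_filter; case: eqP => //= E; exact: Ht.
Qed.

Lemma enum_le q : exists s : seq G, uniq s /\ forall d, (d \in s) = (lev d <= q)%N.
Proof.
elim: q => [|q [s [Us Hs]]].
  exists [::]; split => // d; by rewrite in_nil leqNgt bd_lev_ge1.
case: (enum_eq q.+1) => s' [Us' Hs'].
exists (s ++ s'); split.
  rewrite cat_uniq Us Us' andbT; apply/hasPn => d; rewrite Hs' Hs => /eqP ->.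
  by rewrite ltnn.
move=> d; rewrite mem_cat Hs Hs'; apply/idP/idP.
  by case/orP => [|/eqP ->] //; lia.
move=> H; apply/orP; case: (ltngtP (lev d) q.+1) H => //.
  by left.
by move=> -> _; right.
Qed.

Lemma sum_pick (s : seq G) (t : G) (f : G -> R) :
  uniq s -> t \in s -> \sum_(d <- s) (t == d)%:R * f d = f t.
Proof.
move=> Us Ht; rewrite (big_rem t) //= eqxx mul1r big1_seq; first by rewrite Monoid.mulm1.
move=> d /andP[_ Hd].
case: eqP => [E|_]; last by rewrite mul0r.
by move: Hd; rewrite -E mem_rem_uniqF.
Qed.

Lemma QQ q (x : G -> R) : ext q.+1 (restrict lev q.+1 (Qproj q x)) = Qproj q x.
Proof.
case: q => [|q].
  by rewrite /= (_ : restrict lev 1 (fun _ : G => 0) = fun _ => 0) // ext0.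
by rewrite /= -(bd_compat _ (ltnSn q.+1)).
Qed.

Lemma Q_step q (s : seq G) (x : G -> R) :
  uniq s -> (forall d, (d \in s) = (lev d == q.+1)) ->
  forall t, Qproj q.+1 x t = Qproj q x t + \sum_(d <- s) (x d - Qproj q x d) * dvec d t.
Proof.
move=> Us Hs t.
have Hq1 : (1 <= q.+1)%N by [].
have E : restrict lev q.+1 x = fun g =>
   (fun g => \sum_(d <- s) (x d - Qproj q x d) * @unitvec R B q.+1 d g) g
   + restrict lev q.+1 (Qproj q x) g.
  apply: functional_extensionality => -[u Hu]; rewrite /restrict /unitvec /=.
  case: (ltngtP (lev u) q.+1) Hu => // Hlt _.
  - rewrite big1_seq ?add0r; last first.
      move=> d /andP[_ Hd]; case: eqP => [E|_]; last by rewrite mulr0.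
      by move: Hd; rewrite Hs -E (ltn_eqF Hlt).
    by rewrite QprojE.
  - have -> : \sum_(d <- s) (x d - Qproj q x d) * (if u == d then 1 else 0)
            = \sum_(d <- s) (u == d)%:R * (x d - Qproj q x d).
      by apply: eq_bigr => d _; rewrite mulrC; case: (u == d).
    by rewrite sum_pick // ?Hs ?Hlt // subrK.
rewrite [LHS]/= E (ext_add _ _ Hq1) (ext_sum _ _ _ Hq1) QQ addrC.
apply: congr1; apply: eq_big_seq => d Hd; apply: congr1.
have Hl : lev d = q.+1 by apply/eqP; rewrite -Hs.
by rewrite /dvec; move: Hl; move: (lev d) => l ->.
Qed.

Lemma Q_formula q (s : seq G) (x : G -> R) t :
  uniq s -> (forall d, (d \in s) = (lev d <= q)%N) ->
  Qproj q x t = \sum_(d <- s) dstar d x * dvec d t.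
Proof.
elim: q s => [|q IH] s Us Hs.
  case: s Us Hs => [|d s] _ Hs; first by rewrite big_nil.
  by have := Hs d; rewrite in_cons eqxx /= leqNgt bd_lev_ge1.
rewrite (bigID (fun d => lev d <= q)%N) -(big_filter s (fun d => lev d <= q)%N).
rewrite -(big_filter s (fun d => ~~ (lev d <= q)%N)).
rewrite (@Q_step q (filter (fun d => ~~ (lev d <= q)%N) s) x); first last.
- by move=> d; rewrite mem_filter Hs -ltnNge eqn_leq andbC.
- exact: filter_uniq.
rewrite (IH (filter (fun d => (lev d <= q)%N) s)); first last.
- by move=> d; rewrite mem_filter Hs; apply/idP/idP => [/andP[]//|H]; rewrite H (leq_trans H).
- exact: filter_uniq.
congr (_ + _); apply: eq_big_seq => d; rewrite mem_filter Hs -ltnNge => /andP[H1 H2].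
by rewrite dstarE (_ : (lev d).-1 = q) //; lia.
Qed.

Lemma x_formula (h : G) (s : seq G) (x : G -> R) :
  uniq s -> (forall d, (d \in s) = (lev d <= lev h)%N) ->
  x h = \sum_(d <- s) dstar d x * dvec d h.
Proof. by move=> Us Hs; rewrite -(Q_formula _ _ Us Hs) QprojE. Qed.

Lemma cstar_formula (h : G) (s : seq G) (x : G -> R) :
  uniq s -> (forall d, (d \in s) = (lev d <= (lev h).-1)%N) ->
  cstar h x = \sum_(d <- s) dstar d x * dvec d h.
Proof.
move=> Us Hs; rewrite -(Q_formula _ _ Us Hs) /cstar /estar dstarE.
by rewrite opprB addrC subrK.
Qed.


Lemma span_incl_of (S T : F -> Prop) :
  (forall f, S f -> in_span T f) -> span_incl S T.
Proof.
move=> H f [n [a [phi [HS Hx]]]].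
apply: span_ext (@span_sum T 'I_n (index_enum 'I_n) xpredT a phi _) => [x Hx0|i _].
  by rewrite Hx.
by right; apply: H.
Qed.

Lemma kill (G' : G -> Prop) (S : F -> Prop) (eta : G) :
  (forall f, S f -> exists h, G' h /\ f = dstar h) -> in_span S (estar eta) ->
  forall gam, ~ G' gam -> dvec gam eta = 0.
Proof.
move=> HS [n [a [phi [Hphi Hx]]]] gam Hg.
have := Hx _ (inX_dvec gam); rewrite /estar => ->.
apply: big1 => i _; case: (HS _ (Hphi i)) => h [Gh ->].
rewrite dstar_dvec; case: eqP => [E|_]; last by rewrite mulr0.
by move: Gh; rewrite E.
Qed.

Definition HD (G' : G -> Prop) := forall g h, ~ G' g -> G' h -> estar h (dvec g) = 0.
Definition HE (G' : G -> Prop) := forall g h, ~ G' g -> G' h -> cstar h (dvec g) = 0.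

Lemma cstar_key (G' : G -> Prop) g h : ~ G' g -> G' h -> cstar h (dvec g) = estar h (dvec g).
Proof.
move=> Hg Hh; rewrite /cstar dstar_dvec; case: eqP => [E|_]; last by rewrite subr0.
by move: Hh; rewrite E.
Qed.

Lemma D_E (G' : G -> Prop) : HD G' <-> HE G'.
Proof.
split=> H g h Hg Hh; have := H g h Hg Hh; by rewrite (cstar_key Hg Hh).
Qed.

Lemma D_dspan (G' : G -> Prop) : HD G' -> forall g, G' g ->
  in_span (fun f => exists h, [/\ G' h, (lev h <= lev g)%N & f = estar h]) (dstar g).
Proof.
move=> HD0.
suff: forall n g, (lev g <= n)%N -> G' g ->
  in_span (fun f => exists h, [/\ G' h, (lev h <= lev g)%N & f = estar h]) (dstar g).
  by move=> H g; apply: H (leqnn _).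
elim=> [|n IH] g Hn Gg.
  by move: (bd_lev_ge1 g); rewrite leqNgt ltnS Hn.
case: (enum_le (lev g).-1) => s [Us Hs].
set S := (fun f : F => exists h, [/\ G' h, (lev h <= lev g)%N & f = estar h]).
have H1 : in_span S (estar g) by apply: span_elem; exists g; split.
have H2 : in_span S (fun x => \sum_(d <- s | d \in s) (- dvec d g) * dstar d x).
  apply: span_sum => d Hd; case: (classic (G' d)) => Gd.
    right; apply: span_mono (IH d _ Gd) => [f [h [Gh Hh ->]]|].
      exists h; split => //; apply: (leq_trans Hh); move: Hd; rewrite Hs.
      by move/leq_trans; apply; apply: leq_pred.
    move: Hd; rewrite Hs => H; apply: leq_trans H _; move: Hn; lia.
  by left; have := HD0 d g Gd Gg; rewrite /estar => ->; rewrite oppr0.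
apply: span_ext (span_add (span_scale 1 H1) H2) => x _.
rewrite dstarE (Q_formula _ _ Us Hs) mul1r /estar -big_seq -sumrN.
by congr (_ + _); apply: eq_bigr => d _; rewrite mulNr mulrC.
Qed.

Lemma D_A (G' : G -> Prop) : infinite_subset G' -> HD G' -> self_determined G'.
Proof.
move=> Hinf HD0; split => // g Gg.
apply: span_mono (D_dspan HD0 Gg) => f [h [Gh _ ->]]; by exists h.
Qed.

Lemma D_B (G' : G -> Prop) q : HD G' ->
  span_eq (fun f => exists g, [/\ G' g, (lev g <= q)%N & f = dstar g])
          (fun f => exists g, [/\ G' g, (lev g <= q)%N & f = estar g]).
Proof.
move=> HD0; split; apply: span_incl_of.
  move=> f0 [g [Gg Hg ->]]; apply: span_mono (D_dspan HD0 Gg) => f [h [Gh Hh ->]].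
  by exists h; split => //; apply: leq_trans Hg.
move=> f [h [Gh Hh ->]].
case: (enum_le (lev h)) => s [Us Hs].
set S := (fun f : F => exists g, [/\ G' g, (lev g <= q)%N & f = dstar g]).
have H2 : in_span S (fun x => \sum_(d <- s | d \in s) dvec d h * dstar d x).
  apply: span_sum => d Hd.
  case: (classic (G' d)) => Gd; last by left; apply: HD0.
  right; apply: span_elem; exists d; split => //.
  by apply: leq_trans Hh; rewrite -Hs.
apply: span_ext H2 => x _.
rewrite /estar (x_formula _ Us Hs) -big_seq.
by apply: eq_bigr => d _; rewrite mulrC.
Qed.

Lemma D_C2 (G' : G -> Prop) q : HD G' ->
  span_incl (fun f => exists g, [/\ G' g, lev g = q.+1 & f = cstar g])
            (fun f => exists g (E : nat_interval), [/\ G' g, (lev g <= q)%N &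
                             f = (fun x => estar g (PE E x))]).
Proof.
move=> HD0; apply: span_incl_of => f [g [Gg Hg ->]].
case: (enum_le q) => s [Us Hs].
have Hs' : forall d, (d \in s) = (lev d <= (lev g).-1)%N by move=> d; rewrite Hg.
set S := (fun f : F => exists g (E : nat_interval), [/\ G' g, (lev g <= q)%N &
                             f = (fun x => estar g (PE E x))]).
have H2 : in_span S (fun x => \sum_(d <- s | d \in s) dvec d g * dstar d x).
  apply: span_sum => d Hd.
  case: (classic (G' d)) => Gd; last by left; apply: HD0.
  right; apply: span_elem; exists d, (Ifin (lev d) (lev d)); split => //.
  by rewrite -Hs.
apply: span_ext H2 => x _.
rewrite (cstar_formula _ Us Hs') -big_seq.
by apply: eq_bigr => d _; rewrite mulrC.
Qed.

Lemma B_D (G' : G -> Prop) q0 :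
  (forall q, (q0 <= q)%N ->
       span_eq (fun f => exists g, [/\ G' g, (lev g <= q)%N & f = dstar g])
               (fun f => exists g, [/\ G' g, (lev g <= q)%N & f = estar g])) ->
  HD G'.
Proof.
move=> HB g h Hg Hh.
case: (HB (maxn q0 (lev h)) (leq_maxl _ _)) => _ H2.
have Hs := H2 _ (span_elem (ex_intro _ h (And3 Hh (leq_maxr _ _) erefl))).
rewrite /estar; apply: (kill (G' := G') _ Hs Hg) => f [d [Gd _ ->]]; by exists d.
Qed.

Lemma C_D (G' : G -> Prop) q0 : (forall g, G' g -> (q0 <= lev g)%N) ->
    (span_eq (fun f => exists g, [/\ G' g, (lev g <= q0)%N & f = dstar g])
             (fun f => exists g, [/\ G' g, (lev g <= q0)%N & f = estar g])
     /\ forall q, (q0 <= q)%N ->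
       span_incl (fun f => exists g, [/\ G' g, lev g = q.+1 & f = cstar g])
                 (fun f => exists g (E : nat_interval), [/\ G' g, (lev g <= q)%N &
                             f = (fun x => estar g (PE E x))])) ->
  HD G'.
Proof.
move=> Hlev [[_ H1] H2].
suff: forall n h, (lev h <= n)%N -> G' h -> forall g, ~ G' g -> dvec g h = 0.
  by move=> H g h Hg Hh; apply: (H _ h (leqnn _) Hh).
elim=> [|n IH] h Hn Gh g Hg.
  by move: (bd_lev_ge1 h); rewrite leqNgt ltnS Hn.
have Hq := Hlev h Gh.
case: (ltngtP q0 (lev h)) Hq => // Hq _; last first.
  have Hs := H1 _ (span_elem (ex_intro _ h (And3 Gh (eq_leq (esym Hq)) erefl))).
  apply: (kill (G' := G') _ Hs Hg) => f [d [Gd _ ->]]; by exists d.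
have Hl : lev h = (lev h).-1.+1 by rewrite prednK // bd_lev_ge1.
have Hq' : (q0 <= (lev h).-1)%N by move: Hq; lia.
have Hs := H2 _ Hq' _ (span_elem (ex_intro _ h (And3 Gh Hl erefl))).
case: Hs => m [a [phi [Hphi Hx]]].
have := Hx _ (inX_dvec g).
rewrite (cstar_key Hg Gh) /estar => ->.
apply: big1 => i _; case: (Hphi i) => g' [E [Gg' Hg' ->]].
rewrite /estar PE_dvec_zero ?mulr0 // (IH g') //.
by move: Hg' Hn Hl; lia.
Qed.


Lemma top_eval (n : nat) (c : 'I_n -> R) (hh : 'I_n -> G) l (s : seq G) (x : G -> R) :
  uniq s -> (forall d, (d \in s) = (lev d == l)) ->
  (forall i, (l < lev (hh i))%N -> c i = 0) ->
  \sum_i c i * x (hh i) =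
  \sum_i (if (lev (hh i) < l)%N then c i else 0) * x (hh i)
  + \sum_(d <- s) (\sum_i c i * dvec d (hh i)) * x d.
Proof.
move=> Us Hs Hc.
have E : forall i, c i * x (hh i) =
   (if (lev (hh i) < l)%N then c i else 0) * x (hh i)
   + \sum_(d <- s) c i * dvec d (hh i) * x d.
  move=> i; case: (ltngtP (lev (hh i)) l) => H.
  - rewrite big1_seq ?addr0 // => d /andP[_ Hd].
    rewrite dvec_high ?mulr0 ?mul0r //.
    by move: Hd; rewrite Hs => /eqP ->.
  - rewrite (Hc i H) !mul0r add0r big1_seq // => d _; by rewrite !mul0r.
  - rewrite mul0r add0r.
    rewrite (eq_big_seq (fun d => (hh i == d)%:R * (c i * x d))); last first.
      move=> d Hd; rewrite dvec_val; last by move: Hd; rewrite Hs H => /eqP ->.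
      by rewrite (mulrC (c i)) mulrA.
    by rewrite sum_pick // Hs H.
rewrite (eq_bigr _ (fun i _ => E i)) big_split /=; congr (_ + _).
rewrite exchange_big /=; apply: eq_bigr => d _; by rewrite mulr_suml.
Qed.

Lemma A_D (G' : G -> Prop) :
  (forall g, G' g -> in_span (fun f => exists h, G' h /\ f = estar h) (dstar g)) ->
  HD G'.
Proof.
move=> HA.
suff: forall m eta, (lev eta <= m)%N -> G' eta -> forall gam, ~ G' gam -> dvec gam eta = 0.
  by move=> H g h Hg Hh; apply: (H _ h (leqnn _) Hh).
elim=> [|m IH] eta Hm Geta gam Hgam.
  by move: (bd_lev_ge1 eta); rewrite leqNgt ltnS Hm.
case: (HA eta Geta) => n [a [phi [Hphi Hx]]].
case: (@fin_all_exists _ (fun _ => G) (fun i h => G' h /\ phi i = estar h) Hphi) => hh Hh.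
have Hx' : forall x, inX x -> dstar eta x = \sum_i a i * x (hh i).
  move=> x Hx0; rewrite Hx //; apply: eq_bigr => i _; by rewrite (Hh i).2.
set L := lev eta.
set N := (\max_(i < n) lev (hh i))%N.
pose b l i := if (lev (hh i) <= l)%N then a i else 0.
have Hb : forall k l, (L <= l)%N -> (N - l <= k)%N ->
    forall x, inX x -> dstar eta x = \sum_i b l i * x (hh i).
  elim=> [|k IHk] l HL Hk x Hx0.
    rewrite Hx' //; apply: eq_bigr => i _; rewrite /b.
    have HN : (lev (hh i) <= N)%N by apply: (@leq_bigmax _ (fun i => lev (hh i))).
    by rewrite (leq_trans HN) //; move: Hk; lia.
  case: (leqP (N - l) k) => Hk'; first exact: IHk.
  have HL1 : (L <= l.+1)%N by apply: leqW.
  have Hk1 : (N - l.+1 <= k)%N by move: Hk Hk'; lia.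
  rewrite (IHk l.+1 HL1 Hk1 x Hx0).
  case: (enum_eq l.+1) => s [Us Hs].
  rewrite (@top_eval n (b l.+1) hh l.+1 s x Us Hs); last first.
    by move=> i H; rewrite /b leqNgt H.
  rewrite [X in _ + X]big1_seq ?addr0; last first.
    move=> d /andP[_ Hd].
    rewrite -(IHk l.+1 HL1 Hk1 _ (inX_dvec d)) dstar_dvec.
    case: eqP => [E|_]; last by rewrite mul0r.
    by move: Hd; rewrite Hs -E => /eqP H; move: HL; rewrite /L H ltnn.
  apply: eq_bigr => i _; rewrite /b ltnS.
  by case: ifP => // H; rewrite (leqW H).
have HbL := Hb (N - L)%N L (leqnn _) (leqnn _).
case: (enum_eq L) => s [Us Hs].
have := HbL _ (inX_dvec gam).
rewrite dstar_dvec.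
have -> : (eta == gam) = false by apply/eqP => E; apply: Hgam; rewrite -E.
rewrite (@top_eval n (b L) hh L s _ Us Hs); last first.
  by move=> i H; rewrite /b leqNgt H.
rewrite big1 ?add0r; last first.
  move=> i _; case: ifP => H; last by rewrite mul0r.
  rewrite (IH (hh i)) ?mulr0 //; first by move: Hm H; rewrite /L; lia.
  exact: (Hh i).1.
rewrite (eq_big_seq (fun d => (eta == d)%:R * dvec gam d)); last first.
  move=> d Hd; by rewrite -(HbL _ (inX_dvec d)) dstar_dvec.
by rewrite sum_pick // ?Hs ?/L ?eqxx // => ->.
Qed.

End Aux.

Unset Implicit Arguments.

Theorem proposition1p5 (R : realType) (B : BDspace R) (G' : bd_G B -> Prop)
  (q0 : nat) :
  infinite_subset G' ->
  (exists g, G' g /\ (bd_lev B g <= q0)%N) ->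
  (forall q, (exists g, G' g /\ (bd_lev B g <= q)%N) -> (q0 <= q)%N) ->
  [<->
    (* (a) *)
    self_determined G';
    (* (b) *)
    (forall q, (q0 <= q)%N ->
       span_eq (fun f => exists g, [/\ G' g, (bd_lev B g <= q)%N & f = dstar g])
               (fun f => exists g, [/\ G' g, (bd_lev B g <= q)%N & f = estar g]));
    (* (c) *)
    (span_eq (fun f => exists g, [/\ G' g, (bd_lev B g <= q0)%N & f = dstar g])
             (fun f => exists g, [/\ G' g, (bd_lev B g <= q0)%N & f = estar g])
     /\ forall q, (q0 <= q)%N ->
       span_incl (fun f => exists g, [/\ G' g, bd_lev B g = q.+1 & f = cstar g])
                 (fun f => exists g (E : nat_interval), [/\ G' g, (bd_lev B g <= q)%N &
                             f = (fun x => estar g (PE E x))]));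
    (* (d) *)
    (forall g h, ~ G' g -> G' h -> estar h (dvec g) = 0);
    (* (e) *)
    (forall g h, ~ G' g -> G' h -> cstar h (dvec g) = 0)].
Proof.
move=> Hinf Hq0 Hmin.
have Hlev : forall g, G' g -> (q0 <= bd_lev B g)%N.
  by move=> g Gg; apply: Hmin; exists g; split.
tfae.
- by move=> [_ HA] q _; apply: D_B; apply: A_D.
- move=> HB; have HD0 := B_D HB; split; first exact: D_B.
  by move=> q _; apply: D_C2.
- exact: C_D.
- by move/D_E.
- by move/D_E => HD0; apply: D_A.
Qed.
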